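(* Let $L$ be a frame and $X_L$ its Priestley space with Stone map $\varphi$. (1) For $a\in L$, we have $a=\bigvee\{b\in K(L)\mid b\le a\}$ if and only if $\mathrm{core}\,\varphi(a)$ is dense in $\varphi(a)$. (2) $L$ is an algebraic frame if and only if $X_L$ is an algebraic L-space.
   Context: A frame is a complete lattice satisfying $a\wedge\bigvee S=\bigvee\{a\wedge s\mid s\in S\}$. In a frame $L$, $a\ll b$ means: whenever $b\le\bigvee S$ there is a finite $T\subseteq S$ with $a\le\bigvee T$; $a$ is compact if $a\ll a$, and $K(L)$ is the set of compact elements. $L$ is an algebraic frame if every $a\in L$ satisfies $a=\bigvee\{b\in K(L)\mid b\le a\}$. A Priestley space is a Stone space $X$ with a partial order such that clopen upsets separate points (if $x\not\le y$ there is a clopen upset containing $x$ but not $y$). An L-space is a Priestley space in which the downset of each clopen set is clopen and the closure of each open upset is open. ${\sf ClopUp}(X)$ denotes the set of clopen upsets of $X$. The Priestley space $X_L$ of a frame $L$ is the set of prime filters of $L$ ordered by inclusion, topologized by the subbasis $\{\varphi(a)\}\cup\{X_L\setminus\varphi(a)\}$ ($a\in L$), where $\varphi(a)=\{x\in X_L\mid a\in x\}$; it is an L-space. For an L-space $X$, its spatial part is $Y=\{y\in X\mid {\downarrow}y \text{ is clopen}\}$. A Scott upset of $X$ is a closed upset $F$ with $\min F\subseteq Y$; ${\sf ClopSUp}(X)$ is the set of clopen Scott upsets. For $U\in{\sf ClopUp}(X)$, $\mathrm{core}\,U=\bigcup\{V\in{\sf ClopSUp}(X)\mid V\subseteq U\}$.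 $X$ is an algebraic L-space if $\mathrm{core}\,U$ is dense in $U$ for every $U\in{\sf ClopUp}(X)$. *)

(* Defs.v *)
From HB Require Import structures.
From mathcomp Require Import all_boot all_order.
From mathcomp Require Import boolp classical_sets cardinality topology.
Set Implicit Arguments.
Unset Strict Implicit.
Unset Printing Implicit Defensive.
Local Open Scope classical_set_scope.

Record frame := Frame {
  fcarrier :> Type;
  fle : fcarrier -> fcarrier -> Prop;
  fle_refl : forall a, fle a a;
  fle_trans : forall a b c, fle a b -> fle b c -> fle a c;
  fle_antisym : forall a b, fle a b -> fle b a -> a = b;
  fsup : set fcarrier -> fcarrier;
  fsup_ub : forall S a, S a -> fle a (fsup S);
  fsup_least : forall S b, (forall a, S a -> fle a b) -> fle (fsup S) b;
  fmeet : fcarrier -> fcarrier -> fcarrier;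
  fmeet_lel : forall a b, fle (fmeet a b) a;
  fmeet_ler : forall a b, fle (fmeet a b) b;
  fmeet_glb : forall a b c, fle c a -> fle c b -> fle c (fmeet a b);
  fmeet_sup_distr : forall a S,
    fmeet a (fsup S) = fsup [set c | exists2 s, S s & c = fmeet a s]
}.

Section FrameDefs.
Variable L : frame.

Definition ftop : L := fsup setT.
Definition fbot : L := fsup set0.
Definition fjoin (a b : L) : L := fsup [set a; b].

Definition way_below (a b : L) : Prop :=
  forall S : set L, fle b (fsup S) ->
    exists2 T : set L, finite_set T /\ T `<=` S & fle a (fsup T).

Definition compact_el (a : L) : Prop := way_below a a.

Definition KL : set L := [set a | compact_el a].

Definition algebraic_frame : Prop :=
  forall a : L, a = fsup [set b | KL b /\ fle b a].

Definition prime_filter (F : set L) : Prop :=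
  [/\ F ftop, ~ F fbot,
      (forall a b, F a -> fle a b -> F b),
      (forall a b, F a -> F b -> F (fmeet a b)) &
      (forall a b, F (fjoin a b) -> F a \/ F b)].
End FrameDefs.

Definition XL (L : frame) := {F : set L | prime_filter F}.

HB.instance Definition _ (L : frame) := gen_eqMixin (XL L).
HB.instance Definition _ (L : frame) := gen_choiceMixin (XL L).

Definition phi (L : frame) (a : L) : set (XL L) := [set x | proj1_sig x a].

Definition XL_subbase (L : frame) : set (set (XL L)) :=
  [set U | exists a : L, U = phi a \/ U = ~` phi a].

HB.instance Definition _ (L : frame) :=
  @isSubBaseTopological.Build (XL L) (set (XL L)) (@XL_subbase L) id.

Definition XL_le (L : frame) (x y : XL L) : Prop :=
  proj1_sig x `<=` proj1_sig y.

Section Spaces.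
Variables (X : topologicalType) (le : X -> X -> Prop).

Definition upset (U : set X) : Prop := forall x y, U x -> le x y -> U y.
Definition downset_of (U : set X) : set X := [set y | exists2 x, U x & le y x].

Definition stone_space : Prop :=
  [/\ compact [set: X], hausdorff_space X & totally_disconnected [set: X]].

Definition partial_order : Prop :=
  [/\ (forall x, le x x), (forall x y z, le x y -> le y z -> le x z) &
      (forall x y, le x y -> le y x -> x = y)].

Definition priestley_space : Prop :=
  [/\ stone_space, partial_order &
      forall x y, ~ le x y ->
        exists U : set X, [/\ clopen U, upset U, U x & ~ U y]].

Definition L_space : Prop :=
  [/\ priestley_space,
      (forall U : set X, clopen U -> clopen (downset_of U)) &
      (forall U : set X, open U -> upset U -> open (closure U))].

Definition ClopUp : set (set X) := [set U | clopen U /\ upset U].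

Definition spatial_part : set X := [set y | clopen (downset_of [set y])].

Definition minimal_elts (F : set X) : set X :=
  [set x | F x /\ forall y, F y -> le y x -> y = x].

Definition scott_upset (F : set X) : Prop :=
  [/\ closed F, upset F & minimal_elts F `<=` spatial_part].

Definition ClopSUp : set (set X) := [set V | clopen V /\ scott_upset V].

Definition core (U : set X) : set X :=
  \bigcup_(V in [set V | ClopSUp V /\ V `<=` U]) V.

Definition dense_in (A U : set X) : Prop := U `<=` closure A.

Definition algebraic_L_space : Prop :=
  L_space /\ forall U, ClopUp U -> dense_in (core U) U.
End Spaces.

(* Main.v *)
Require Import Defs.
From HB Require Import structures.
From mathcomp Require Import all_boot all_order.
From mathcomp Require Import boolp classical_sets cardinality topology.
Local Open Scope classical_set_scope.

Module Aux.
Set Implicit Arguments.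
Unset Strict Implicit.

Section FrameLemmas.
Variable L : frame.
Local Notation "x ⊑ y" := (@fle L x y) (at level 70).
Implicit Types a b c d e : L.

Lemma le_trans' a b c : a ⊑ b -> b ⊑ c -> a ⊑ c.
Proof. exact: fle_trans. Qed.

Lemma le_top a : a ⊑ ftop L.
Proof. exact: fsup_ub. Qed.

Lemma bot_le a : fbot L ⊑ a.
Proof. by apply: fsup_least. Qed.

Lemma join_l a b : a ⊑ fjoin a b.
Proof. by apply: fsup_ub; left. Qed.

Lemma join_r a b : b ⊑ fjoin a b.
Proof. by apply: fsup_ub; right. Qed.

Lemma join_least a b c : a ⊑ c -> b ⊑ c -> fjoin a b ⊑ c.
Proof. by move=> ac bc; apply: fsup_least => x [->|->]. Qed.

Lemma meet_mono a b c d : a ⊑ c -> b ⊑ d -> fmeet a b ⊑ fmeet c d.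
Proof.
move=> ac bd; apply: fmeet_glb.
- exact: fle_trans (fmeet_lel _ _) ac.
- exact: fle_trans (fmeet_ler _ _) bd.
Qed.

Lemma join_mono a b c d : a ⊑ c -> b ⊑ d -> fjoin a b ⊑ fjoin c d.
Proof.
move=> ac bd; apply: join_least.
- exact: fle_trans ac (join_l _ _).
- exact: fle_trans bd (join_r _ _).
Qed.

Lemma sup_mono (S T : set L) : (forall s, S s -> exists2 t, T t & s ⊑ t) ->
  fsup S ⊑ fsup T.
Proof.
move=> H; apply: fsup_least => s /H [t Tt st].
exact: fle_trans st (fsup_ub Tt).
Qed.

Lemma meet_sup_le a (S : set L) c :
  (forall s, S s -> fmeet a s ⊑ c) -> fmeet a (fsup S) ⊑ c.
Proof.
move=> H; rewrite fmeet_sup_distr; apply: fsup_least => x [s Ss ->].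
exact: H.
Qed.

Lemma meet_join_le a b c : fmeet a (fjoin b c) ⊑ fjoin (fmeet a b) (fmeet a c).
Proof.
apply: meet_sup_le => s [->|->]; [exact: join_l| exact: join_r].
Qed.

Definition imp a c : L := fsup [set d | fmeet a d ⊑ c].

Lemma imp_le a c : fmeet a (imp a c) ⊑ c.
Proof. by apply: meet_sup_le. Qed.

Lemma le_imp a c d : fmeet a d ⊑ c -> d ⊑ imp a c.
Proof. by move=> H; apply: fsup_ub. Qed.

End FrameLemmas.

Section PF.
Variable L : frame.
Local Notation "x ⊑ y" := (@fle L x y) (at level 70).
Implicit Types a b c d e : L.
Implicit Types x y z w : XL L.

Lemma pf_top x : sval x (ftop L). Proof. by case: x => F []. Qed.
Lemma pf_nbot x : ~ sval x (fbot L). Proof. by case: x => F []. Qed.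
Lemma pf_up x a b : sval x a -> a ⊑ b -> sval x b.
Proof. by case: x => F [] ? ? Hup ? ? /=; apply: Hup. Qed.
Lemma pf_meet x a b : sval x a -> sval x b -> sval x (fmeet a b).
Proof. by case: x => F [] ? ? ? Hm ? /=; apply: Hm. Qed.
Lemma pf_join x a b : sval x (fjoin a b) -> sval x a \/ sval x b.
Proof. by case: x => F [] ? ? ? ? Hj /=; apply: Hj. Qed.
Lemma pf_meetE x a b : sval x (fmeet a b) -> sval x a /\ sval x b.
Proof. by move=> H; split; apply: pf_up H _; [apply: fmeet_lel|apply: fmeet_ler]. Qed.
Lemma pf_joinl x a b : sval x a -> sval x (fjoin a b).
Proof. by move=> H; apply: pf_up H (join_l _ _). Qed.
Lemma pf_joinr x a b : sval x b -> sval x (fjoin a b).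
Proof. by move=> H; apply: pf_up H (join_r _ _). Qed.

Lemma XL_eq x y : (forall a, sval x a <-> sval y a) -> x = y.
Proof.
case: x y => F PF [G PG] /= H; apply: eq_exist.
by apply/seteqP; split=> a /H.
Qed.

Definition filt (F : set L) :=
  (forall a b, F a -> a ⊑ b -> F b) /\ (forall a b, F a -> F b -> F (fmeet a b)).

Lemma PFT (F I : set L) :
  F (ftop L) -> filt F ->
  I (fbot L) -> (forall a b, I b -> a ⊑ b -> I a) ->
  (forall a b, I a -> I b -> I (fjoin a b)) ->
  (forall a, F a -> I a -> False) ->
  exists x, F `<=` sval x /\ (forall a, sval x a -> ~ I a).
Proof.
move=> Ftop [Fup Fmeet] Ibot Idown Ijoin FI.
pose good G := [/\ F `<=` G, filt G & forall a, G a -> ~ I a].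
pose P := [set G | good G \/ G = set0].
have [A [PA Amax]] : exists A, P A /\ forall B, A `<` B -> ~ P B.
  apply: Zorn_bigcup => C CP Ctot.
  have [[G0 CG0 [g G0g]]|none] := pselect (exists2 G, C G & G !=set0); last first.
    right; apply/seteqP; split=> // a [G CG Ga]; apply: none.
    by exists G => //; exists a.
  have goodC G a : C G -> G a -> good G.
    by move=> CG Ga; case: (CP _ CG) => // GE; move: Ga; rewrite GE.
  left; split.
  - move=> a Fa; exists G0 => //.
    by case: (goodC _ _ CG0 G0g) => + _ _; apply.
  - split.
    + move=> a b [G CG Ga] ab; exists G => //.
      by case: (goodC _ _ CG Ga) => _ [Gup _] _; exact: Gup Ga ab.
    + move=> a b [G CG Ga] [H CH Hb].
      have [GH|HG] := Ctot _ _ CG CH.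
      * exists H => //; case: (goodC _ _ CH Hb) => _ [_ Hm] _.
        by apply: Hm => //; exact: GH.
      * exists G => //; case: (goodC _ _ CG Ga) => _ [_ Hm] _.
        by apply: Hm => //; exact: HG.
  - by move=> a [G CG Ga]; case: (goodC _ _ CG Ga) => _ _; apply.
have goodF : good F.
  by split=> // a Fa Ia; apply: FI Fa Ia.
have gA : good A.
  case: PA => // A0; exfalso; apply: (Amax F); last by left.
  rewrite A0; split=> //; move=> /(_ _ Ftop) //.
case: gA => FA [Aup Ameet] AI.
have Atop : A (ftop L) by apply: FA.
have ext c : ~ A c -> exists i m, [/\ I i, A m & fmeet m c ⊑ i].
  move=> nAc; pose B := [set e | exists2 m, A m & fmeet m c ⊑ e].
  apply: contrapT => nex; apply: (Amax B).
    split.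
    - by move=> m Am; exists m => //; apply: fmeet_lel.
    - move=> BA; apply: nAc; apply: BA; exists (ftop L) => //; exact: fmeet_ler.
  left; split.
  - by move=> a /FA Aa; exists a => //; apply: fmeet_lel.
  - split.
    + by move=> a b [m Am ma] ab; exists m => //; apply: fle_trans ab.
    + move=> a b [m Am ma] [m' Am' mb]; exists (fmeet m m'); first exact: Ameet.
      apply: fmeet_glb.
      * apply: fle_trans ma; apply: meet_mono (fle_refl _); exact: fmeet_lel.
      * apply: fle_trans mb; apply: meet_mono (fle_refl _); exact: fmeet_ler.
  - by move=> a [m Am ma] Ia; apply: nex; exists a, m.
have Aprime : prime_filter A.
  split; [exact: Atop| by move=> /AI; apply| exact: Aup| exact: Ameet|].
  - move=> c d Acd; apply: contrapT => /not_orP [nc nd].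
    have [i [m [Ii Am mi]]] := ext _ nc.
    have [i' [m' [Ii' Am' mi']]] := ext _ nd.
    apply: (AI (fmeet (fmeet m m') (fjoin c d))).
      by apply: (Ameet _ _ (Ameet _ _ Am Am')).
    apply: (Idown _ (fjoin i i')); first exact: Ijoin.
    apply: fle_trans (meet_join_le _ _ _) _; apply: join_mono.
    + apply: fle_trans mi; apply: meet_mono (fle_refl _); exact: fmeet_lel.
    + apply: fle_trans mi'; apply: meet_mono (fle_refl _); exact: fmeet_ler.
by exists (exist _ A Aprime).
Qed.
End PF.

Section Phi.
Variable L : frame.
Local Notation "x ⊑ y" := (@fle L x y) (at level 70).
Local Notation X := (XL L).
Implicit Types a b c d e : L.
Implicit Types x y z w : X.

Lemma phi_mono a b : a ⊑ b -> phi a `<=` phi b.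
Proof. by move=> ab x xa; apply: pf_up ab. Qed.

Lemma le_of_phi a b : phi a `<=` phi b -> a ⊑ b.
Proof.
move=> H; apply: contrapT => nab.
have [||||| x [Fx xI]] := @PFT L [set f | a ⊑ f] [set f | f ⊑ b] (le_top _).
- split; first by move=> c d ac cd; apply: fle_trans cd.
  by move=> c d ac ad; apply: fmeet_glb.
- exact: bot_le.
- by move=> c d db cd; apply: fle_trans db.
- by move=> ? ? ? ?; apply: join_least.
- by move=> f af fb; apply: nab; apply: fle_trans fb.
- by apply: (xI b) (fle_refl _); apply: H; apply: Fx; apply: fle_refl.
Qed.

Lemma subbase_open (U : set X) : XL_subbase U -> open U.
Proof.
move=> sU; exists [set U]; first by move=> V ->; apply: finI_from1.
by rewrite bigcup_set1.
Qed.

Lemma phi_open a : open (phi a).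
Proof. by apply: subbase_open; exists a; left. Qed.

Lemma phiC_open a : open (~` phi a).
Proof. by apply: subbase_open; exists a; right. Qed.

Lemma phi_closed a : closed (phi a).
Proof. by rewrite -openC; exact: phiC_open. Qed.

Lemma phi_clopen a : clopen (phi a).
Proof. by split; [exact: phi_open| exact: phi_closed]. Qed.

Lemma phiC_clopen a : clopen (~` phi a).
Proof. apply: (@clopenC _ _ set0); exact: phi_clopen. Qed.

Lemma basic_seq (s : seq (set X)) x :
  (forall U, U \in s -> XL_subbase U) -> (forall U, U \in s -> U x) ->
  exists a c, [/\ sval x a, ~ sval x c &
    forall y, sval y a -> ~ sval y c -> forall U, U \in s -> U y].
Proof.
elim: s => [|U s IH] sb sx.
  by exists (ftop L), (fbot L); split; [exact: pf_top|exact: pf_nbot|].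
have [|| a [c [xa xc H]]] := IH.
- by move=> V Vs; apply: sb; rewrite in_cons Vs orbT.
- by move=> V Vs; apply: sx; rewrite in_cons Vs orbT.
have [e [Ue|Ue]] := sb U (mem_head _ _).
- exists (fmeet a e), c; split => //.
  + apply: pf_meet => //; have := sx U (mem_head _ _); rewrite Ue.
    by [].
  + move=> y /pf_meetE [ya ye] yc V; rewrite in_cons => /orP [/eqP ->|Vs].
    * by rewrite Ue.
    * exact: H.
- exists a, (fjoin c e); split => //.
  + move=> /pf_join [//|xe]; have := sx U (mem_head _ _); rewrite Ue.
    by apply.
  + move=> y ya ycj V; rewrite in_cons => /orP [/eqP ->|Vs].
    * by rewrite Ue => ye; apply: ycj; apply: pf_joinr.
    * apply: H => // yc; apply: ycj; exact: pf_joinl.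
Qed.

Lemma nbhs_basic x (W : set X) : nbhs x W ->
  exists a c, [/\ sval x a, ~ sval x c & phi a `&` ~` phi c `<=` W].
Proof.
rewrite nbhsE => -[B [[D' D'sub BE] Bx] BW].
move: Bx; rewrite -BE => -[V D'V Vx].
have [E Esub VE] := D'sub V D'V.
have [|| a [c [xa xc H]]] := @basic_seq (finmap.enum_fset E) x.
- by move=> U UE; apply: set_mem; exact: Esub.
- by move=> U UE; move: Vx; rewrite -VE; apply.
exists a, c; split => // y [ya yc]; apply: BW; rewrite -BE; exists V => //.
change (V y); rewrite -VE => U UE; exact: H.
Qed.

Lemma basic_nbhs x a c : sval x a -> ~ sval x c -> nbhs x (phi a `&` ~` phi c).
Proof.
move=> xa xc; apply: open_nbhs_nbhs; split => //.
by apply: openI; [exact: phi_open| exact: phiC_open].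
Qed.

Lemma phi_nbhs x a : sval x a -> nbhs x (phi a).
Proof. by move=> xa; apply: open_nbhs_nbhs; split => //; exact: phi_open. Qed.

Lemma phiC_nbhs x a : ~ sval x a -> nbhs x (~` phi a).
Proof. by move=> xa; apply: open_nbhs_nbhs; split => //; exact: phiC_open. Qed.

End Phi.

Section Space.
Variable L : frame.
Local Notation "x ⊑ y" := (@fle L x y) (at level 70).
Local Notation X := (XL L).
Implicit Types a b c d e : L.
Implicit Types x y z w : X.

Lemma XL_compact : compact [set: X].
Proof.
rewrite compact_ultra => F UF _.
pose G : set L := [set a | F (phi a)].
have Gup a b : G a -> a ⊑ b -> G b.
  by move=> Ga ab; apply: filterS Ga; apply: phi_mono.
have Gmeet a b : G a -> G b -> G (fmeet a b).
  move=> Ga Gb; apply: filterS (filterI Ga Gb).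
  by move=> w [wa wb]; apply: pf_meet.
have GC a : ~ G a -> F (~` phi a).
  by move=> nGa; case: (in_ultra_setVsetC (phi a) UF).
have PG : prime_filter G.
  split.
  - by apply: filterS filterT => w _; apply: pf_top.
  - move=> Gb; apply: (filter_not_empty F); apply: filterS Gb.
    by move=> w /pf_nbot.
  - exact: Gup.
  - exact: Gmeet.
  - move=> a b Gab; have [Ga|nGa] := pselect (G a); first by left.
    right; apply: filterS (filterI Gab (GC _ nGa)).
    by move=> w [/pf_join [//|//]].
exists (exist _ G PG); split => //.
move=> W /nbhs_basic [a [c [xa xc sub]]].
apply: (@filterS _ F _ _ _ sub); apply: filterI; first exact: xa.
exact: GC.
Qed.

Lemma XL_point_neq x y : x <> y -> exists a, (sval x a /\ ~ sval y a) \/ (~ sval x a /\ sval y a).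
Proof.
move=> xy; apply: contrapT => H; apply: xy; apply: XL_eq => a.
split=> h; apply: contrapT => h'; apply: H; exists a; by [left|right].
Qed.

Lemma XL_hausdorff : hausdorff_space X.
Proof.
move=> p q clpq; apply: contrapT => /XL_point_neq [a [[pa qa]|[pa qa]]].
- have [w [w1 w2]] := clpq _ _ (phi_nbhs pa) (phiC_nbhs qa).
  exact: w2.
- have [w [w1 w2]] := clpq _ _ (phiC_nbhs pa) (phi_nbhs qa).
  exact: w1.
Qed.

Lemma XL_zero_dim : zero_dimensional X.
Proof.
move=> x y /eqP /XL_point_neq [a [[xa ya]|[xa ya]]].
- by exists (phi a); split => //; exact: phi_clopen.
- by exists (~` phi a); split => //; exact: phiC_clopen.
Qed.

Lemma XL_stone : stone_space X.
Proof.
split; [exact: XL_compact| exact: XL_hausdorff|].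
exact: zero_dimension_totally_disconnected XL_zero_dim.
Qed.

Lemma gen_cluster (K : set X) y : closed K ->
  (forall a, sval y a -> phi a `&` K !=set0) ->
  exists2 x, K x & sval y `<=` sval x.
Proof.
move=> Kcl Hne.
have Kc : compact K by apply: (subclosed_compact Kcl XL_compact).
pose F := filter_from [set a | sval y a] (fun a => phi a `&` K).
have FF : Filter F.
  apply: filter_from_filter; first by exists (ftop L); apply: pf_top.
  move=> i j yi yj; exists (fmeet i j); first exact: pf_meet.
  by move=> w [/pf_meetE [wi wj] Kw].
have PF : ProperFilter F by apply: filter_from_proper.
have FK : F K by exists (ftop L); [exact: pf_top| move=> w []].
have [x [Kx clx]] := Kc F PF FK.
exists x => // a ya; apply: contrapT => xa.
have FA : F (phi a `&` K) by exists a.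
have [w [[w1 w2] w3]] := clx (phi a `&` K) (~` phi a) FA (phiC_nbhs xa).
exact: w3.
Qed.

Lemma closure_bigcup_le (S : set L) :
  closure (\bigcup_(b in S) phi b) `<=` phi (fsup S).
Proof.
move=> p pc; apply: contrapT => np.
have [w [[b Sb wb] nw]] := pc _ (phiC_nbhs np).
by apply: nw; apply: pf_up wb (fsup_ub Sb).
Qed.

Lemma closure_bigcup_ge (S : set L) :
  phi (fsup S) `<=` closure (\bigcup_(b in S) phi b).
Proof.
move=> p ps B /nbhs_basic [a [c [pa pc sub]]].
apply: contrapT => hne; apply: pc.
apply: pf_up (pf_meet pa ps) _; apply: meet_sup_le => s Ss.
apply: le_of_phi => w /pf_meetE [wa ws]; apply: contrapT => wc.
by apply: hne; exists w; split; [exists s| apply: sub].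
Qed.

Lemma openup_cover (U : set X) x : open U -> upset (@XL_le L) U -> U x ->
  exists2 c, sval x c & phi c `<=` U.
Proof.
move=> oU uU Ux; apply: contrapT => H.
have [||w nUw xw] := @gen_cluster (~` U) x.
- by rewrite closedC.
- move=> a xa; apply: contrapT => ne; apply: H; exists a => // w wa.
  by apply: contrapT => nU; apply: ne; exists w.
by apply: nUw; apply: uU Ux xw.
Qed.

Definition supU (U : set X) : L := fsup [set c | phi c `<=` U].

Lemma openup_eq (U : set X) : open U -> upset (@XL_le L) U ->
  U = \bigcup_(c in [set c | phi c `<=` U]) phi c.
Proof.
move=> oU uU; apply/seteqP; split.
- by move=> x Ux; have [c xc cU] := openup_cover oU uU Ux; exists c.
- by move=> x [c cU xc]; apply: cU.
Qed.

Lemma closure_openup (U : set X) : open U -> upset (@XL_le L) U ->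
  closure U = phi (supU U).
Proof.
move=> oU uU; rewrite {1}(openup_eq oU uU); apply/seteqP; split.
- exact: closure_bigcup_le.
- exact: closure_bigcup_ge.
Qed.

Lemma clopenup_phi (U : set X) : clopen U -> upset (@XL_le L) U -> U = phi (supU U).
Proof.
move=> [oU cU] uU; rewrite -closure_openup //.
exact/closure_id.
Qed.

Lemma XL_priestley : priestley_space (@XL_le L).
Proof.
split; first exact: XL_stone.
- split.
  + by move=> x; apply: subset_refl.
  + by move=> x y z xy yz; apply: subset_trans yz.
  + move=> x y xy yx; apply: XL_eq => a; split; [exact: xy| exact: yx].
- move=> x y nxy.
  have [a [xa ya]] : exists a, sval x a /\ ~ sval y a.
    apply: contrapT => H; apply: nxy => a xa; apply: contrapT => ya.
    by apply: H; exists a.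
  exists (phi a); split => //; first exact: phi_clopen.
  by move=> w w' wa ww'; apply: ww'.
Qed.

Lemma downset_clopen (U : set X) : clopen U -> clopen (downset_of (@XL_le L) U).
Proof.
move=> [oU cU]; split.
- rewrite openE => y [x Ux yx].
  have [a [c [xa xc sub]]] := nbhs_basic (open_nbhs_nbhs (conj oU Ux)).
  have nyh : ~ sval y (imp a c).
    move=> yh; apply: xc; apply: pf_up (imp_le a c).
    by apply: pf_meet => //; apply: yx.
  apply: filterS (phiC_nbhs nyh) => w nwh.
  have [||||||z [Fz zI]] := @PFT L [set e | exists2 m, sval w m & fmeet m a ⊑ e]
      [set e | e ⊑ c].
  + by exists (ftop L); [exact: pf_top| exact: le_top].
  + split.
    * by move=> e f [m wm me] ef; exists m => //; apply: fle_trans ef.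
    * move=> e f [m wm me] [m' wm' mf]; exists (fmeet m m'); first exact: pf_meet.
      apply: fmeet_glb.
      - apply: fle_trans me; apply: meet_mono (fle_refl _); exact: fmeet_lel.
      - apply: fle_trans mf; apply: meet_mono (fle_refl _); exact: fmeet_ler.
  + exact: bot_le.
  + by move=> e f fc ef; apply: fle_trans fc.
  + by move=> e f ec fc; apply: join_least.
  + move=> e [m wm me] ec; apply: nwh; apply: pf_up wm _.
    apply: le_imp; apply: fle_trans (fle_trans me ec).
    by apply: fmeet_glb; [exact: fmeet_ler| exact: fmeet_lel].
  + exists z.
    * apply: sub; split.
      - apply: Fz; exists (ftop L); first exact: pf_top.
        exact: fmeet_ler.
      - by move=> zc; apply: (zI c zc); apply: fle_refl.
    * move=> e we; apply: Fz; exists e => //; exact: fmeet_lel.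
- rewrite -openC openE => y nyU.
  have [a ya H] : exists2 a, sval y a & ~ (phi a `&` U !=set0).
    apply: contrapT => H.
    have [|x Ux yx] := @gen_cluster U y cU.
      move=> a ya; apply: contrapT => h; apply: H; by exists a.
    by apply: nyU; exists x.
  apply: filterS (phi_nbhs ya) => w wa [x Ux wx].
  by apply: H; exists x; split => //; apply: wx.
Qed.

Lemma XL_L_space : L_space (@XL_le L).
Proof.
split.
- exact: XL_priestley.
- exact: downset_clopen.
- by move=> U oU uU; rewrite closure_openup //; exact: phi_open.
Qed.

End Space.

Definition Leq (L : frame) : Type := fcarrier L.
HB.instance Definition _ (L : frame) := gen_eqMixin (Leq L).

Section Scott.
Variable L : frame.
Local Notation "x ⊑ y" := (@fle L x y) (at level 70).
Local Notation X := (XL L).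
Local Notation le := (@XL_le L).
Implicit Types a b c d e : L.
Implicit Types x y z w : X.

Definition cp z := forall S : set L, sval z (fsup S) -> exists2 s, S s & sval z s.

Lemma spatial_cp z : spatial_part le z -> cp z.
Proof.
move=> [o _] S zS; apply: contrapT => H.
have zdz : downset_of le [set z] z by exists z => //; apply: subset_refl.
have [a [c [za zc sub]]] := nbhs_basic (open_nbhs_nbhs (conj o zdz)).
apply: zc; apply: pf_up (pf_meet za zS) _; apply: meet_sup_le => s Ss.
apply: le_of_phi => w /pf_meetE [wa ws]; apply: contrapT => wc.
have [x' xz wz] := sub w (conj wa wc).
by apply: H; exists s => //; rewrite -xz; apply: wz.
Qed.

Lemma cp_spatial z : cp z -> spatial_part le z.
Proof.
move=> cpz; pose m := fsup [set b | ~ sval z b].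
suff E : downset_of le [set z] = ~` phi m by rewrite /spatial_part /= E; exact: phiC_clopen.
apply/seteqP; split.
- move=> w [x' xz wz] wm; rewrite xz in wz.
  by have [b nb zb] := cpz _ (wz _ wm); apply: nb.
- move=> w nwm; exists z => // b wb; apply: contrapT => nzb.
  by apply: nwm; apply: pf_up wb (fsup_ub nzb).
Qed.

Lemma fin_sup_notin z (T : set L) : finite_set T ->
  (forall t, T t -> ~ sval z t) -> ~ sval z (fsup T).
Proof.
move=> /(@finite_seqP (Leq L)) [s ->].
elim: s => [|t s IH] H.
  move=> zb; apply: (@pf_nbot L z); apply: pf_up zb _.
  by apply: fsup_least.
have le1 : fsup [set` (t :: s : seq (Leq L))] ⊑ fjoin t (fsup [set` s]).
  apply: fsup_least => u; rewrite /= in_cons => /orP [/eqP ->|us].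
  - exact: join_l.
  - exact: fle_trans (fsup_ub us) (join_r _ _).
move=> zts; have := pf_up zts le1 => /pf_join [zt|zs].
- by apply: (H t) => //=; rewrite mem_head.
- apply: IH zs => u us; apply: H => /=; by rewrite in_cons us orbT.
Qed.

Lemma compact_cp b z : KL b -> minimal_elts le (phi b) z -> cp z.
Proof.
move=> Kb [zb zmin] S zS; apply: contrapT => H.
have nzS s : S s -> ~ sval z s by move=> Ss zs; apply: H; exists s.
have [|||||| w [Fw wI]] := @PFT L [set f | b ⊑ f]
   [set e | exists2 j, ~ sval z j & e ⊑ fjoin j (fsup S)].
- exact: le_top.
- split; first by move=> c d ac cd; apply: fle_trans cd.
  by move=> c d ac ad; apply: fmeet_glb.
- by exists (fbot L); [exact: pf_nbot| exact: bot_le].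
- by move=> e f [j nj fj] ef; exists j => //; apply: fle_trans fj.
- move=> e f [j nj ej] [j' nj' fj']; exists (fjoin j j').
    by move=> /pf_join [].
  apply: join_least.
  + apply: fle_trans ej _; apply: join_mono (fle_refl _); exact: join_l.
  + apply: fle_trans fj' _; apply: join_mono (fle_refl _); exact: join_r.
- move=> f bf [j nj fj].
  have [T [Tfin TS] bT] := Kb (S `|` [set j]) (fle_trans bf (fle_trans fj
     (join_least (fsup_ub (or_intror (erefl j)))
        (sup_mono (fun s Ss => ex_intro2 _ _ s (or_introl Ss) (fle_refl s)))))).
  apply: (@fin_sup_notin z T Tfin).
    by move=> t /TS [/nzS|->].
  exact: pf_up zb bT.
have wz : le w z.
  move=> e we; apply: contrapT => nze; apply: (wI e we).
  by exists e => //; apply: join_l.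
have wb : phi b w by apply: Fw; apply: fle_refl.
have := zmin w wb wz => wE.
apply: (wI (fsup S)); first by rewrite wE.
by exists (fbot L); [exact: pf_nbot| exact: join_r].
Qed.

Lemma compact_ClopSUp b : KL b -> ClopSUp le (phi b).
Proof.
move=> Kb; split; first exact: phi_clopen.
split.
- exact: phi_closed.
- by move=> w w' wb ww'; apply: ww'.
- by move=> z mz; apply: cp_spatial; apply: compact_cp mz.
Qed.

Lemma min_below b x : sval x b ->
  exists z, minimal_elts le (phi b) z /\ le z x.
Proof.
move=> xb.
pose good (C : set L) := [/\ prime_filter (~` C), ~` C `<=` sval x & ~ C b].
pose P := [set C | good C \/ C = set0].
have [A [PA Amax]] : exists A, P A /\ forall B, A `<` B -> ~ P B.
  apply: Zorn_bigcup => C CP Ctot.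
  have [[C0 CC0 [g C0g]]|none] := pselect (exists2 D, C D & D !=set0); last first.
    right; apply/seteqP; split=> // a [D CD Da]; apply: none.
    by exists D => //; exists a.
  have goodC D a : C D -> D a -> good D.
    by move=> CD Da; case: (CP _ CD) => // DE; move: Da; rewrite DE.
  have gC0 := goodC _ _ CC0 C0g.
  left; split.
  - split.
    + move=> [D CD Dt]; have [[Dtop _ _ _ _] _ _] := goodC _ _ CD Dt.
      exact: Dtop Dt.
    + move=> nUb; case: gC0 => [[_ nb _ _ _] _ _].
      apply: nUb; exists C0 => //; apply: contrapT => h; exact: nb h.
    + move=> a a' nUa aa' [D CD Da']; have [[_ _ up _ _] _ _] := goodC _ _ CD Da'.
      have : (~` D) a by move=> Da; apply: nUa; exists D.
      by move=> /up /(_ aa').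
    + move=> a a' nUa nUa' [D CD Dm]; have [[_ _ _ mt _] _ _] := goodC _ _ CD Dm.
      have h1 : (~` D) a by move=> Da; apply: nUa; exists D.
      have h2 : (~` D) a' by move=> Da; apply: nUa'; exists D.
      exact: (mt _ _ h1 h2).
    + move=> a a' nUj; apply: contrapT => /not_orP [h1 h2].
      have [D1 CD1 D1a] : (\bigcup_(D in C) D) a by apply: contrapT.
      have [D2 CD2 D2a] : (\bigcup_(D in C) D) a' by apply: contrapT.
      have [D12|D21] := Ctot _ _ CD1 CD2.
      * have [[_ _ _ _ pr] _ _] := goodC _ _ CD2 D2a.
        have : (~` D2) (fjoin a a') by move=> Dj; apply: nUj; exists D2.
        by move=> /pr [] //; apply; apply: D12.
      * have [[_ _ _ _ pr] _ _] := goodC _ _ CD1 D1a.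
        have : (~` D1) (fjoin a a') by move=> Dj; apply: nUj; exists D1.
        by move=> /pr [] //; apply; apply: D21.
  - move=> a nUa; case: gC0 => _ sub _; apply: sub => C0a; apply: nUa.
    by exists C0.
  - by move=> [D CD Db]; have [_ _] := goodC _ _ CD Db; apply.
have goodx : good (~` sval x).
  split.
  - by rewrite setCK; exact: (proj2_sig x).
  - by rewrite setCK.
  - by [].
have gA : good A.
  case: PA => // A0; exfalso; apply: (Amax (~` sval x)); last by left.
  rewrite A0; split=> //; move=> /(_ (fbot L)) h; apply: h; exact: pf_nbot.
case: gA => Apf Ax Ab.
exists (exist _ _ Apf); split; last exact: Ax.
split; first exact: Ab.
move=> y yb yz; apply: XL_eq => a; split; first exact: yz.
move=> nAa; apply: contrapT => nya.
have gy : good (~` sval y).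
  split.
  - by rewrite setCK; exact: (proj2_sig y).
  - rewrite setCK; move=> e ye; apply: Ax; exact: yz.
  - by move=> h; apply: h; exact: yb.
have AyC : A `<=` ~` sval y by move=> e Ae ye; apply: (yz e ye).
apply: (Amax (~` sval y)); last by left.
by split => // /(_ a nya).
Qed.

Lemma scott_compact b : ClopSUp le (phi b) -> KL b.
Proof.
move=> [_ [_ _ msp]] S bS; apply: contrapT => H.
have [|||||| x [Fx xI]] := @PFT L [set f | b ⊑ f]
   [set e | exists2 T, finite_set T /\ T `<=` S & e ⊑ fsup T].
- exact: le_top.
- split; first by move=> c d ac cd; apply: fle_trans cd.
  by move=> c d ac ad; apply: fmeet_glb.
- by exists set0; [split; [exact: finite_set0| exact: sub0set]| exact: bot_le].
- by move=> e f [T TS fT] ef; exists T => //; apply: fle_trans fT.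
- move=> e f [T [Tf TS] eT] [T' [Tf' TS'] fT']; exists (T `|` T').
    split; first by rewrite finite_setU.
    by move=> t [/TS|/TS'].
  apply: join_least.
  + apply: fle_trans eT _; apply: sup_mono => s Ts.
    by exists s; [left| exact: fle_refl].
  + apply: fle_trans fT' _; apply: sup_mono => s Ts.
    by exists s; [right| exact: fle_refl].
- move=> f bf [T TS fT]; apply: H; exists T => //; exact: fle_trans fT.
have xb : sval x b by apply: Fx; exact: fle_refl.
have [z [mz zx]] := min_below xb.
have [s Ss zs] := spatial_cp (msp z mz) (pf_up mz.1 bS).
apply: (xI s (zx s zs)); exists [set s]; last exact: fsup_ub.
by split; [exact: finite_set1| move=> t ->].
Qed.

End Scott.
End Aux.
Import Aux.
Unset Implicit Arguments.
Lemma part1 (L : frame) (a : L) :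
  a = fsup [set b | KL b /\ fle b a] <->
  dense_in (core (@XL_le L) (phi a)) (phi a).
Proof.
pose K := [set b | KL b /\ fle b a].
have core_ge : \bigcup_(b in K) phi b `<=` core (@XL_le L) (phi a).
  move=> x [b [Kb ba] xb]; exists (phi b) => //; split.
  - exact: compact_ClopSUp.
  - exact: phi_mono.
have core_le : core (@XL_le L) (phi a) `<=` \bigcup_(b in K) phi b.
  move=> x [V [cV Va] Vx].
  have VE : V = phi (supU V).
    by case: cV => clV [_ uV _]; apply: clopenup_phi.
  exists (supU V) => //; last by rewrite -VE.
  split.
  - by apply: scott_compact; rewrite -VE.
  - by apply: le_of_phi; rewrite -VE.
split.
- move=> aE p pa.
  have pK : phi (fsup K) p by rewrite /K -aE.
  exact: closureS core_ge _ (closure_bigcup_ge pK).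
- move=> dense; apply: fle_antisym.
  + apply: le_of_phi => p /dense pc.
    exact: closure_bigcup_le (closureS core_le pc).
  + by apply: fsup_least => b [].
Qed.

Theorem theorem4p4 (L : frame) :
  (forall a : L,
     a = fsup [set b | KL b /\ fle b a] <->
     dense_in (core (@XL_le L) (phi a)) (phi a)) /\
  (algebraic_frame L <-> algebraic_L_space (@XL_le L)).
Proof.
split; first exact: part1.
split.
- move=> alg; split; first exact: XL_L_space.
  move=> U [cU uU]; rewrite (clopenup_phi cU uU).
  by apply/part1; apply: alg.
- move=> [_ H] a; apply/part1; apply: H; split; first exact: phi_clopen.
  by move=> w w' wa ww'; apply: ww'.
Qed.
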